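(* Consider the three-dimensional stochastic Maxwell equations in the stochastic Hamiltonian form $$\mathbf{K}\,{\rm d}_{t}\mathcal{E}+\mathbf{L}_{1}\mathcal{E}_{x}{\rm d}t+\mathbf{L}_{2}\mathcal{E}_{y}{\rm d}t+\mathbf{L}_{3}\mathcal{E}_{z}{\rm d}t=\nabla S(\mathcal{E})\circ{\rm d}W(t)$$ with periodic boundary conditions, discretized by the stochastic Runge-Kutta method described in the context, whose coefficients satisfy $b_kb_j-b_ka_{kj}-b_ja_{jk}=0$, $\overline{b}_p\overline{b}_q-\overline{b}_p\overline{a}_{pq}-\overline{b}_q\overline a_{qp}=0$, $\widetilde{b}_m\widetilde{b}_n-\widetilde{b}_m\widetilde{a}_{mn}-\widetilde{b}_n\widetilde{a}_{nm}=0$, $\widehat{b}_l\widehat{b}_v-\widehat{b}_l\widehat{a}_{lv}-\widehat{b}_v\widehat{a}_{vl}=0$ for all indices. Then for all $\rho=0,1,\dots,N$, almost surely, $$\sum_{i_1}\sum_{i_2}\sum_{i_3}\sum_{m=1}^{s}\sum_{p=1}^{\iota}\sum_{l=1}^{\sigma}\widetilde{b}_{m}\overline{b}_p\widehat{b}_l\Big(|\mathbf{E}_{mpl;i_1,i_2,i_3}^{\rho+1}|^2+|\mathbf{H}_{mpl;i_1,i_2,i_3}^{\rho+1}|^2\Big)=\sum_{i_1}\sum_{i_2}\sum_{i_3}\sum_{m=1}^{s}\sum_{p=1}^{\iota}\sum_{l=1}^{\sigma}\widetilde{b}_{m}\overline{b}_p\widehat{b}_l\Big(|\mathbf{E}_{mpl;i_1,i_2,i_3}^{\rho}|^2+|\mathbf{H}_{mpl;i_1,i_2,i_3}^{\rho}|^2\Big),$$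 where the sums over $i_1,i_2,i_3$ run over all spatial cells of the periodic grid.
   Context: $\mathcal{E}=(H^T,E^T)^T\in\mathbb{R}^6$; $S(\mathcal{E})=\frac{\lambda}{2}(|E_1|^2+|E_2|^2+|E_3|^2+|H_1|^2+|H_2|^2+|H_3|^2)$ for a real constant $\lambda$; $\mathbf{K}=\begin{pmatrix}0&-I_3\\ I_3&0\end{pmatrix}$, $\mathbf{L}_i=\begin{pmatrix}\mathcal{D}_i&0\\0&\mathcal{D}_i\end{pmatrix}$ with $\mathcal{D}_1=\begin{pmatrix}0&0&0\\0&0&-1\\0&1&0\end{pmatrix}$, $\mathcal{D}_2=\begin{pmatrix}0&0&1\\0&0&0\\-1&0&0\end{pmatrix}$, $\mathcal{D}_3=\begin{pmatrix}0&-1&0\\1&0&0\\0&0&0\end{pmatrix}$; $W$ is a $Q$-Wiener process, Stratonovich sense. The method (time step $\tau$, space steps $\Delta x,\Delta y,\Delta z$; temporal coefficients $a_{kj},b_k$, $k,j=1..r$; spatial coefficients $\widetilde{a}_{mn},\widetilde{b}_m$ ($s$ stages, $x$), $\overline{a}_{pq},\overline{b}_p$ ($\iota$ stages, $y$), $\widehat{a}_{lv},\widehat{b}_l$ ($\sigma$ stages, $z$)) has on each space-time cell stage values $\Upsilon_{mplk}\in\mathbb{R}^6$, discrete derivatives $\delta_t\Upsilon,\delta_x\Upsilon,\delta_y\Upsilon,\delta_z\Upsilon$, time-level values $\mathcal{E}^\rho_{mpl}$ and face values, related by $\Upsilon_{mplk}=\mathcal{E}_{mpl}^{\rho}+\tau\sum_{j}a_{kj}\delta_t\Upsilon_{mplj}$,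 $\mathcal{E}_{mpl}^{\rho+1}=\mathcal{E}_{mpl}^{\rho}+\tau\sum_{k}b_{k}\delta_t\Upsilon_{mplk}$, $\Upsilon_{mplk}=\mathcal{E}_{i_1pl}^{k}+\Delta x\sum_{n}\widetilde{a}_{mn}\delta_{x}\Upsilon_{nplk}$, $\mathcal{E}_{(i_1+1)pl}^{k}=\mathcal{E}_{i_1pl}^{k}+\Delta x\sum_{m}\widetilde{b}_{m}\delta_{x}\Upsilon_{mplk}$, $\Upsilon_{mplk}=\mathcal{E}_{mi_2l}^{k}+\Delta y\sum_{q}\overline{a}_{pq}\delta_{y}\Upsilon_{mqlk}$, $\mathcal{E}_{m(i_{2}+1)l}^{k}=\mathcal{E}_{mi_2l}^{k}+\Delta y\sum_{p}\overline{b}_{p}\delta_{y}\Upsilon_{mplk}$, $\Upsilon_{mplk}=\mathcal{E}_{mpi_3}^{k}+\Delta z\sum_{v}\widehat{a}_{lv}\delta_{z}\Upsilon_{mpvk}$, $\mathcal{E}_{mp(i_3+1)}^{k}=\mathcal{E}_{mpi_3}^{k}+\Delta z\sum_{u}\widehat{b}_{u}\delta_{z}\Upsilon_{mpuk}$, $\tau\mathbf{K}\delta_{t}\Upsilon_{mplk}+\tau\sum_{i=1}^3\mathbf{L}_{i}\delta_{x_i}\Upsilon_{mplk}=\nabla S(\Upsilon_{mplk})\Delta W$, with $(\delta_{x_1},\delta_{x_2},\delta_{x_3})=(\delta_x,\delta_y,\delta_z)$ and $\Delta W$ the real Wiener increment at the stage point. $\mathcal{E}^{\rho}_{mpl;i_1,i_2,i_3}=((\mathbf{H}^{\rho}_{mpl;i_1,i_2,i_3})^T,(\mathbf{E}^{\rho}_{mpl;i_1,i_2,i_3})^T)^T$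 denotes the value $\mathcal{E}^\rho_{mpl}$ of the spatial cell indexed by $(i_1,i_2,i_3)$. *)

(* Defs.v *)
From HB Require Import structures.
From mathcomp Require Import all_boot all_order all_algebra.
Set Implicit Arguments. Unset Strict Implicit. Unset Printing Implicit Defensive.
Import Order.TTheory GRing.Theory Num.Theory.
Local Open Scope ring_scope.

Section MaxwellDefs.
Variable R : realFieldType.

Definition Dmat1 : 'M[R]_3 := \matrix_(i < 3, j < 3)
  (if (i == 1%N :> nat) && (j == 2%N :> nat) then -1
   else if (i == 2%N :> nat) && (j == 1%N :> nat) then 1 else 0).
Definition Dmat2 : 'M[R]_3 := \matrix_(i < 3, j < 3)
  (if (i == 0%N :> nat) && (j == 2%N :> nat) then 1
   else if (i == 2%N :> nat) && (j == 0%N :> nat) then -1 else 0).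
Definition Dmat3 : 'M[R]_3 := \matrix_(i < 3, j < 3)
  (if (i == 0%N :> nat) && (j == 1%N :> nat) then -1
   else if (i == 1%N :> nat) && (j == 0%N :> nat) then 1 else 0).

Definition Kmat : 'M[R]_6 := block_mx 0 (- 1%:M) 1%:M 0 : 'M[R]_(3 + 3).
Definition Lmat (D : 'M[R]_3) : 'M[R]_6 := block_mx D 0 0 D : 'M[R]_(3 + 3).

(* calE = (H^T, E^T)^T *)
Definition Hpart (v : 'cV[R]_6) : 'cV[R]_3 := usubmx (v : 'cV[R]_(3 + 3)).
Definition Epart (v : 'cV[R]_6) : 'cV[R]_3 := dsubmx (v : 'cV[R]_(3 + 3)).
Definition sqnorm3 (u : 'cV[R]_3) : R := \sum_(i < 3) (u i 0) ^+ 2.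

Definition Sfun (lam : R) (v : 'cV[R]_6) : R :=
  lam / 2%:R * (sqnorm3 (Epart v) + sqnorm3 (Hpart v)).
Definition gradS (lam : R) (v : 'cV[R]_6) : 'cV[R]_6 := lam *: v.

End MaxwellDefs.

(* Main.v *)
Require Import Defs.
From HB Require Import structures.
From mathcomp Require Import all_boot all_order all_algebra.
From mathcomp Require Import ring lra.
Import Order.TTheory GRing.Theory Num.Theory.
Local Open Scope ring_scope.


Set Implicit Arguments.
Section Aux.
Variable R : realFieldType.
Implicit Types (M : 'M[R]_6) (u v w : 'cV[R]_6).

Definition qform M u v : R := (u^T *m (M *m v)) 0 0.

Lemma qfDr M u v w : qform M u (v + w) = qform M u v + qform M u w.
Proof. by rewrite /qform !mulmxDr mxE. Qed.
Lemma qfZr M u c v : qform M u (c *: v) = c * qform M u v.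
Proof. by rewrite /qform -!scalemxAr mxE. Qed.
Lemma qfNr M u v : qform M u (- v) = - qform M u v.
Proof. by rewrite /qform !mulmxN mxE. Qed.
Lemma qfDl M u v w : qform M (u + v) w = qform M u w + qform M v w.
Proof. by rewrite /qform linearD /= mulmxDl mxE. Qed.
Lemma qfZl M c u v : qform M (c *: u) v = c * qform M u v.
Proof. by rewrite /qform linearZ /= -scalemxAl mxE. Qed.
Lemma qf_sumr M u n (F : 'I_n -> 'cV[R]_6) :
  qform M u (\sum_(i < n) F i) = \sum_(i < n) qform M u (F i).
Proof. by rewrite /qform !mulmx_sumr summxE. Qed.
Lemma qf_suml M u n (F : 'I_n -> 'cV[R]_6) :
  qform M (\sum_(i < n) F i) u = \sum_(i < n) qform M (F i) u.
Proof. by rewrite /qform raddf_sum mulmx_suml summxE. Qed.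
Lemma qf_tr M u v : qform M u v = qform M^T v u.
Proof.
rewrite /qform.
have -> : (u^T *m (M *m v)) 0 0 = ((u^T *m (M *m v))^T) 0 0 by rewrite [RHS]mxE.
by rewrite !trmx_mul trmxK mulmxA.
Qed.
Lemma qf_sym M u v : M^T = M -> qform M u v = qform M v u.
Proof. by move=> hM; rewrite qf_tr hM. Qed.
Lemma qf_skew0 M u : M^T = - M -> qform M u u = 0.
Proof.
move=> hM; have h := qf_tr M u u.
have h2 : qform (- M) u u = - qform M u u by rewrite /qform mulNmx mulmxN mxE.
rewrite hM h2 in h; lra.
Qed.
Lemma qf1 u v : qform 1%:M u (v) = (u^T *m v) 0 0.
Proof. by rewrite /qform mul1mx. Qed.
Lemma qf1M M u v : qform 1%:M u (M *m v) = qform M u v.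
Proof. by rewrite /qform mul1mx. Qed.

Lemma Q_form v : sqnorm3 (Epart v) + sqnorm3 (Hpart v) = qform 1%:M v v.
Proof.
rewrite /qform mul1mx mxE /sqnorm3 /Epart /Hpart.
rewrite (@big_split_ord _ _ _ 3 3) /= addrC.
congr (_ + _); apply: eq_bigr => i _; rewrite !mxE expr2 //.
Qed.

Lemma rk_quad n M (c : R) (a : 'I_n -> 'I_n -> R) (b : 'I_n -> R) y0 y1
  (Y D : 'I_n -> 'cV[R]_6) :
  M^T = M ->
  (forall k j, b k * b j - b k * a k j - b j * a j k = 0) ->
  (forall k, Y k = y0 + c *: \sum_(j < n) a k j *: D j) ->
  y1 = y0 + c *: \sum_(k < n) b k *: D k ->
  qform M y1 y1 - qform M y0 y0 = 2 * c * \sum_(k < n) b k * qform M (Y k) (D k).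
Proof.
move=> hM hs hY ->.
set g := fun k j => qform M (D k) (D j).
have gs k j : g k j = g j k by rewrite /g qf_sym.
have e1 : qform M y0 (\sum_(k < n) b k *: D k) =
   \sum_(k < n) b k * qform M (Y k) (D k)
   - c * \sum_(k < n) \sum_(j < n) b k * a k j * g k j.
  rewrite qf_sumr mulr_sumr -sumrB; apply: eq_bigr => k _.
  rewrite qfZr hY qfDl qfZl qf_suml.
  have -> : \sum_(j < n) qform M (a k j *: D j) (D k) = \sum_(j < n) a k j * g k j.
    by apply: eq_bigr => j _; rewrite qfZl gs.
  have -> : \sum_(j < n) b k * a k j * g k j = b k * \sum_(j < n) a k j * g k j.
    by rewrite mulr_sumr; apply: eq_bigr => j _; ring.
  ring.
have e2 : qform M (\sum_(k < n) b k *: D k) (\sum_(k < n) b k *: D k) =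
   \sum_(k < n) \sum_(j < n) b k * b j * g k j.
  rewrite qf_suml; apply: eq_bigr => k _; rewrite qfZl qf_sumr mulr_sumr.
  by apply: eq_bigr => j _; rewrite qfZr /g; ring.
have e3 : \sum_(k < n) \sum_(j < n) b k * a k j * g k j =
          \sum_(k < n) \sum_(j < n) b j * a j k * g k j.
  rewrite exchange_big; apply: eq_bigr => k _; apply: eq_bigr => j _.
  by rewrite gs.
have e4 : \sum_(k < n) \sum_(j < n) b k * b j * g k j
   - \sum_(k < n) \sum_(j < n) b k * a k j * g k j
   - \sum_(k < n) \sum_(j < n) b j * a j k * g k j = 0.
  rewrite -!sumrB; apply: big1 => k _; rewrite -!sumrB; apply: big1 => j _.
  by rewrite -!mulrBl hs mul0r.
rewrite qfDl !qfDr !qfZl !qfZr (qf_sym (\sum_(k < n) b k *: D k) y0 hM).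
rewrite e1 e2.
have -> : \sum_(k < n) \sum_(j < n) b k * b j * g k j =
  \sum_(k < n) \sum_(j < n) b k * a k j * g k j +
  \sum_(k < n) \sum_(j < n) b j * a j k * g k j by lra.
rewrite -e3; ring.
Qed.
End Aux.
Arguments qform {R}.

Unset Implicit Arguments.


Section Aux2.
Variable R : realFieldType.

Lemma tele n s (M : 'M[R]_6) (bt : 'I_s -> R) (al : 'I_s -> 'I_s -> R) (dx : R)
  (F : 'I_n -> 'cV[R]_6) (Y D : 'I_n -> 'I_s -> 'cV[R]_6) :
  M^T = M -> dx != 0 ->
  (forall m q, bt m * bt q - bt m * al m q - bt q * al q m = 0) ->
  (forall i m, Y i m = F i + dx *: \sum_(q < s) al m q *: D i q) ->
  (forall i, F (ordS i) = F i + dx *: \sum_(m < s) bt m *: D i m) ->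
  \sum_(i < n) \sum_(m < s) bt m * qform M (Y i m) (D i m) = 0.
Proof.
move=> hM hdx hs hY hF.
have h i : \sum_(m < s) bt m * qform M (Y i m) (D i m) =
   (qform M (F (ordS i)) (F (ordS i)) - qform M (F i) (F i)) / (2 * dx).
  rewrite (rk_quad al bt (Y i) (D i) hM hs (hY i) (hF i)).
  by field.
under eq_bigr do rewrite h.
rewrite -mulr_suml sumrB.
have -> : \sum_(i < n) qform M (F (ordS i)) (F (ordS i)) = \sum_(i < n) qform M (F i) (F i).
  by rewrite [RHS](reindex_inj (@ordS_inj n)).
by rewrite subrr mul0r.
Qed.

Lemma KK : Kmat R *m Kmat R = - 1%:M.
Proof.
change (@mulmx R (3+3) (3+3) (3+3) (Kmat R) (Kmat R) = - (1%:M : 'M[R]_(3+3))).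
rewrite /Kmat mulmx_block !mul0mx !mulmx0 !mul1mx !mulmx1 !addr0 !add0r.
by rewrite (scalar_mx_block 3 3) opp_block_mx oppr0.
Qed.

Lemma Ktr : (Kmat R)^T = - Kmat R.
Proof.
change (@trmx R (3+3) (3+3) (Kmat R) = - (Kmat R : 'M[R]_(3+3))).
by rewrite /Kmat tr_block_mx opp_block_mx !trmx0 trmx1 linearN /= trmx1 oppr0 opprK.
Qed.

Lemma KLtr (D : 'M[R]_3) : D^T = - D -> (Kmat R *m Lmat D)^T = Kmat R *m Lmat D.
Proof.
move=> hD.
change (@trmx R (3+3) (3+3) (@mulmx R (3+3) (3+3) (3+3) (Kmat R) (Lmat D)) =
  @mulmx R (3+3) (3+3) (3+3) (Kmat R) (Lmat D)).
rewrite /Kmat /Lmat mulmx_block !mul0mx !mulmx0 !mul1mx !addr0 !add0r mulNmx mul1mx.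
by rewrite tr_block_mx !trmx0 linearN /= hD opprK.
Qed.

Lemma D1tr : (Dmat1 R)^T = - Dmat1 R.
Proof. by apply/matrixP => i j; rewrite !mxE; case: i => [[|[|[|?]]] ?]; case: j => [[|[|[|?]]] ?] //=; rewrite ?oppr0 ?opprK. Qed.
Lemma D2tr : (Dmat2 R)^T = - Dmat2 R.
Proof. by apply/matrixP => i j; rewrite !mxE; case: i => [[|[|[|?]]] ?]; case: j => [[|[|[|?]]] ?] //=; rewrite ?oppr0 ?opprK. Qed.
Lemma D3tr : (Dmat3 R)^T = - Dmat3 R.
Proof. by apply/matrixP => i j; rewrite !mxE; case: i => [[|[|[|?]]] ?]; case: j => [[|[|[|?]]] ?] //=; rewrite ?oppr0 ?opprK. Qed.

Section S6.
Variables T1 T2 T3 T4 T5 T6 : finType.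
Lemma sum6D (F G : T1 -> T2 -> T3 -> T4 -> T5 -> T6 -> R) :
  \sum_a \sum_b \sum_c \sum_d \sum_e \sum_f (F a b c d e f + G a b c d e f) =
  \sum_a \sum_b \sum_c \sum_d \sum_e \sum_f F a b c d e f +
  \sum_a \sum_b \sum_c \sum_d \sum_e \sum_f G a b c d e f.
Proof.
rewrite -big_split; apply: eq_bigr => a _; rewrite -big_split; apply: eq_bigr => b _.
rewrite -big_split; apply: eq_bigr => c _; rewrite -big_split; apply: eq_bigr => d _.
rewrite -big_split; apply: eq_bigr => e _; rewrite -big_split //.
Qed.
Lemma sum6M (x : R) (F : T1 -> T2 -> T3 -> T4 -> T5 -> T6 -> R) :
  \sum_a \sum_b \sum_c \sum_d \sum_e \sum_f (x * F a b c d e f) =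
  x * \sum_a \sum_b \sum_c \sum_d \sum_e \sum_f F a b c d e f.
Proof.
rewrite mulr_sumr; apply: eq_bigr => a _; rewrite mulr_sumr; apply: eq_bigr => b _.
rewrite mulr_sumr; apply: eq_bigr => c _; rewrite mulr_sumr; apply: eq_bigr => d _.
rewrite mulr_sumr; apply: eq_bigr => e _; rewrite mulr_sumr //.
Qed.
Lemma reorder_x (F : T1 -> T2 -> T3 -> T4 -> T5 -> T6 -> R) :
  \sum_a \sum_b \sum_c \sum_d \sum_e \sum_f F a b c d e f =
  \sum_b \sum_c \sum_e \sum_f \sum_a \sum_d F a b c d e f.
Proof.
rewrite exchange_big; apply: eq_bigr => b _.
rewrite exchange_big; apply: eq_bigr => c _.
under eq_bigr => a _ do rewrite exchange_big.
rewrite exchange_big; apply: eq_bigr => e _.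
under eq_bigr => a _ do rewrite exchange_big.
by rewrite exchange_big.
Qed.
Lemma reorder_y (F : T1 -> T2 -> T3 -> T4 -> T5 -> T6 -> R) :
  \sum_a \sum_b \sum_c \sum_d \sum_e \sum_f F a b c d e f =
  \sum_a \sum_c \sum_d \sum_f \sum_b \sum_e F a b c d e f.
Proof.
apply: eq_bigr => a _.
rewrite exchange_big; apply: eq_bigr => c _.
rewrite exchange_big; apply: eq_bigr => d _.
under eq_bigr => b _ do rewrite exchange_big.
by rewrite exchange_big.
Qed.
Lemma reorder_z (F : T1 -> T2 -> T3 -> T4 -> T5 -> T6 -> R) :
  \sum_a \sum_b \sum_c \sum_d \sum_e \sum_f F a b c d e f =
  \sum_a \sum_b \sum_d \sum_e \sum_c \sum_f F a b c d e f.
Proof.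
apply: eq_bigr => a _; apply: eq_bigr => b _.
rewrite exchange_big; apply: eq_bigr => d _.
by rewrite exchange_big.
Qed.
End S6.
End Aux2.


Lemma qfM (R : realFieldType) (M N : 'M[R]_6) (u v : 'cV[R]_6) :
  qform M u (N *m v) = qform (M *m N) u v.
Proof. rewrite /qform. by rewrite (mulmxA M N v). Qed.

Lemma sum6_ext (R : realFieldType) (T1 T2 T3 T4 T5 T6 : finType) (F G : T1 -> T2 -> T3 -> T4 -> T5 -> T6 -> R) :
  (forall a b c d e f, F a b c d e f = G a b c d e f) ->
  \sum_a \sum_b \sum_c \sum_d \sum_e \sum_f F a b c d e f =
  \sum_a \sum_b \sum_c \sum_d \sum_e \sum_f G a b c d e f.
Proof.
move=> h; do 6 (apply: eq_bigr => ? _); exact: h.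
Qed.

Lemma inner0 (R : realFieldType) (I J : finType) (r : nat) (x w : J -> R) (c : R)
  (b : 'I_r -> R) (g : I -> J -> 'I_r -> R) :
  (forall m, x m = c * w m) -> (forall k, \sum_i \sum_m w m * g i m k = 0) ->
  \sum_i \sum_m x m * (\sum_(k < r) b k * g i m k) = 0.
Proof.
move=> hx hg.
transitivity (\sum_i \sum_m \sum_(k < r) c * b k * (w m * g i m k)).
  apply: eq_bigr => i _; apply: eq_bigr => m _; rewrite hx mulr_sumr.
  by apply: eq_bigr => k _; ring.
under eq_bigr => i _ do rewrite exchange_big.
rewrite exchange_big; apply: big1 => k _.
under eq_bigr => i _ do rewrite -mulr_sumr.
by rewrite -mulr_sumr hg mulr0.
Qed.

Theorem mainTheorem3
  (R : realFieldType) (lam : R)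
  (N1 N2 N3 : nat)                 (* numbers of spatial cells (periodic grid) *)
  (r s iota sigma : nat)           (* numbers of stages in t, x, y, z *)
  (a : 'I_r -> 'I_r -> R) (b : 'I_r -> R)
  (atil : 'I_s -> 'I_s -> R) (bt : 'I_s -> R)
  (ab : 'I_iota -> 'I_iota -> R) (bb : 'I_iota -> R)
  (ah : 'I_sigma -> 'I_sigma -> R) (bh : 'I_sigma -> R)
  (tau dx dy dz : R)
  (N : nat)
  (* stage values and discrete derivatives, indexed by rho, cell, m p l k *)
  (Ups dT dX dY dZ : nat -> 'I_N1 -> 'I_N2 -> 'I_N3 ->
     'I_s -> 'I_iota -> 'I_sigma -> 'I_r -> 'cV[R]_6)
  (* time-level values E^rho_{mpl} on each cell *)
  (En : nat -> 'I_N1 -> 'I_N2 -> 'I_N3 -> 'I_s -> 'I_iota -> 'I_sigma -> 'cV[R]_6)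
  (* face values: Fx .. i1 i2 i3 p l k = E^k_{i1 p l} (left x-face of cell i1), etc. *)
  (Fx : nat -> 'I_N1 -> 'I_N2 -> 'I_N3 -> 'I_iota -> 'I_sigma -> 'I_r -> 'cV[R]_6)
  (Fy : nat -> 'I_N1 -> 'I_N2 -> 'I_N3 -> 'I_s -> 'I_sigma -> 'I_r -> 'cV[R]_6)
  (Fz : nat -> 'I_N1 -> 'I_N2 -> 'I_N3 -> 'I_s -> 'I_iota -> 'I_r -> 'cV[R]_6)
  (* Wiener increments at the stage points (one realization) *)
  (dW : nat -> 'I_N1 -> 'I_N2 -> 'I_N3 -> 'I_s -> 'I_iota -> 'I_sigma -> 'I_r -> R) :
  0 < tau -> 0 < dx -> 0 < dy -> 0 < dz ->
  (* symplectic conditions *)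
  (forall k j, b k * b j - b k * a k j - b j * a j k = 0) ->
  (forall p q, bb p * bb q - bb p * ab p q - bb q * ab q p = 0) ->
  (forall m n, bt m * bt n - bt m * atil m n - bt n * atil n m = 0) ->
  (forall l v, bh l * bh v - bh l * ah l v - bh v * ah v l = 0) ->
  (* temporal Runge-Kutta relations *)
  (forall rho i1 i2 i3 m p l k, (rho <= N)%N ->
     Ups rho i1 i2 i3 m p l k =
       En rho i1 i2 i3 m p l + tau *: \sum_(j < r) a k j *: dT rho i1 i2 i3 m p l j) ->
  (forall rho i1 i2 i3 m p l, (rho <= N)%N ->
     En rho.+1 i1 i2 i3 m p l =
       En rho i1 i2 i3 m p l + tau *: \sum_(k < r) b k *: dT rho i1 i2 i3 m p l k) ->
  (* x-direction relations (periodic: ordS) *)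
  (forall rho i1 i2 i3 m p l k, (rho <= N)%N ->
     Ups rho i1 i2 i3 m p l k =
       Fx rho i1 i2 i3 p l k + dx *: \sum_(n < s) atil m n *: dX rho i1 i2 i3 n p l k) ->
  (forall rho i1 i2 i3 p l k, (rho <= N)%N ->
     Fx rho (ordS i1) i2 i3 p l k =
       Fx rho i1 i2 i3 p l k + dx *: \sum_(m < s) bt m *: dX rho i1 i2 i3 m p l k) ->
  (* y-direction relations *)
  (forall rho i1 i2 i3 m p l k, (rho <= N)%N ->
     Ups rho i1 i2 i3 m p l k =
       Fy rho i1 i2 i3 m l k + dy *: \sum_(q < iota) ab p q *: dY rho i1 i2 i3 m q l k) ->
  (forall rho i1 i2 i3 m l k, (rho <= N)%N ->
     Fy rho i1 (ordS i2) i3 m l k =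
       Fy rho i1 i2 i3 m l k + dy *: \sum_(p < iota) bb p *: dY rho i1 i2 i3 m p l k) ->
  (* z-direction relations *)
  (forall rho i1 i2 i3 m p l k, (rho <= N)%N ->
     Ups rho i1 i2 i3 m p l k =
       Fz rho i1 i2 i3 m p k + dz *: \sum_(v < sigma) ah l v *: dZ rho i1 i2 i3 m p v k) ->
  (forall rho i1 i2 i3 m p k, (rho <= N)%N ->
     Fz rho i1 i2 (ordS i3) m p k =
       Fz rho i1 i2 i3 m p k + dz *: \sum_(u < sigma) bh u *: dZ rho i1 i2 i3 m p u k) ->
  (* the discrete stochastic Hamiltonian equation at each stage point *)
  (forall rho i1 i2 i3 m p l k, (rho <= N)%N ->
     tau *: (Kmat R *m dT rho i1 i2 i3 m p l k)
     + tau *: (Lmat (Dmat1 R) *m dX rho i1 i2 i3 m p l k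
               + Lmat (Dmat2 R) *m dY rho i1 i2 i3 m p l k
               + Lmat (Dmat3 R) *m dZ rho i1 i2 i3 m p l k)
     = dW rho i1 i2 i3 m p l k *: gradS lam (Ups rho i1 i2 i3 m p l k)) ->
  forall rho, (rho <= N)%N ->
    \sum_(i1 < N1) \sum_(i2 < N2) \sum_(i3 < N3)
      \sum_(m < s) \sum_(p < iota) \sum_(l < sigma)
        bt m * bb p * bh l *
        (sqnorm3 (Epart (En rho.+1 i1 i2 i3 m p l))
         + sqnorm3 (Hpart (En rho.+1 i1 i2 i3 m p l)))
    =
    \sum_(i1 < N1) \sum_(i2 < N2) \sum_(i3 < N3)
      \sum_(m < s) \sum_(p < iota) \sum_(l < sigma)
        bt m * bb p * bh l *
        (sqnorm3 (Epart (En rho i1 i2 i3 m p l))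
         + sqnorm3 (Hpart (En rho i1 i2 i3 m p l))).

Proof.
move=> htau hdx hdy hdz hsT hsY hsX hsZ hUT hET hUX hFX hUY hFY hUZ hFZ hEq rho hrho.
pose M1 := Kmat R *m Lmat (Dmat1 R).
pose M2 := Kmat R *m Lmat (Dmat2 R).
pose M3 := Kmat R *m Lmat (Dmat3 R).
have hM1 : M1^T = M1 := @KLtr R _ (D1tr R).
have hM2 : M2^T = M2 := @KLtr R _ (D2tr R).
have hM3 : M3^T = M3 := @KLtr R _ (D3tr R).
have tau0 : tau != 0 by rewrite gt_eqF.
have key : forall i1 i2 i3 m p l k,
  qform 1%:M (Ups rho i1 i2 i3 m p l k) (dT rho i1 i2 i3 m p l k) =
  qform M1 (Ups rho i1 i2 i3 m p l k) (dX rho i1 i2 i3 m p l k) +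
  qform M2 (Ups rho i1 i2 i3 m p l k) (dY rho i1 i2 i3 m p l k) +
  qform M3 (Ups rho i1 i2 i3 m p l k) (dZ rho i1 i2 i3 m p l k).
  move=> i1 i2 i3 m p l k.
  have e := congr1 (mulmx (Kmat R)) (hEq rho i1 i2 i3 m p l k hrho).
  rewrite /gradS !mulmxDr -!scalemxAr !mulmxA (KK R) mulNmx mul1mx in e.
  set U := Ups rho i1 i2 i3 m p l k in e *.
  set X := Kmat R *m _ in e.
  have e3 : tau *: dT rho i1 i2 i3 m p l k = tau *: X - dW rho i1 i2 i3 m p l k *: (lam *: (Kmat R *m U)).
    by rewrite -e scalerN opprD opprK addrCA subrr addr0.
  apply: (mulfI tau0).
  rewrite -qfZr e3 qfDr qfNr !qfZr !qf1M (qf_skew0 _ (Ktr R)) /X.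
  rewrite !qfDr !qfM.
  rewrite /M1 /M2 /M3; ring.
have pt : forall i1 i2 i3 m p l,
  bt m * bb p * bh l * (sqnorm3 (Epart (En rho.+1 i1 i2 i3 m p l)) + sqnorm3 (Hpart (En rho.+1 i1 i2 i3 m p l))) =
  bt m * bb p * bh l * (sqnorm3 (Epart (En rho i1 i2 i3 m p l)) + sqnorm3 (Hpart (En rho i1 i2 i3 m p l))) +
  (2 * tau * (bt m * bb p * bh l * \sum_(k < r) b k * qform M1 (Ups rho i1 i2 i3 m p l k) (dX rho i1 i2 i3 m p l k)) +
  (2 * tau * (bt m * bb p * bh l * \sum_(k < r) b k * qform M2 (Ups rho i1 i2 i3 m p l k) (dY rho i1 i2 i3 m p l k)) +
   2 * tau * (bt m * bb p * bh l * \sum_(k < r) b k * qform M3 (Ups rho i1 i2 i3 m p l k) (dZ rho i1 i2 i3 m p l k)))).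
  move=> i1 i2 i3 m p l; rewrite !Q_form.
  have h := @rk_quad R r 1%:M tau a b (En rho i1 i2 i3 m p l) (En rho.+1 i1 i2 i3 m p l)
     (Ups rho i1 i2 i3 m p l) (dT rho i1 i2 i3 m p l) (trmx1 _ _) hsT
     (fun k => hUT rho i1 i2 i3 m p l k hrho) (hET rho i1 i2 i3 m p l hrho).
  have hs : \sum_(k < r) b k * (qform M1 (Ups rho i1 i2 i3 m p l k) (dX rho i1 i2 i3 m p l k) +
      qform M2 (Ups rho i1 i2 i3 m p l k) (dY rho i1 i2 i3 m p l k) +
      qform M3 (Ups rho i1 i2 i3 m p l k) (dZ rho i1 i2 i3 m p l k)) =
    \sum_(k < r) b k * qform M1 (Ups rho i1 i2 i3 m p l k) (dX rho i1 i2 i3 m p l k) +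
    \sum_(k < r) b k * qform M2 (Ups rho i1 i2 i3 m p l k) (dY rho i1 i2 i3 m p l k) +
    \sum_(k < r) b k * qform M3 (Ups rho i1 i2 i3 m p l k) (dZ rho i1 i2 i3 m p l k).
    by rewrite -!big_split; apply: eq_bigr => k _ /=; ring.
  have h2 : \sum_(k < r) b k * qform 1%:M (Ups rho i1 i2 i3 m p l k) (dT rho i1 i2 i3 m p l k) =
    \sum_(k < r) b k * (qform M1 (Ups rho i1 i2 i3 m p l k) (dX rho i1 i2 i3 m p l k) +
      qform M2 (Ups rho i1 i2 i3 m p l k) (dY rho i1 i2 i3 m p l k) +
      qform M3 (Ups rho i1 i2 i3 m p l k) (dZ rho i1 i2 i3 m p l k)).
    by apply: eq_bigr => k _; rewrite key.
  rewrite h2 hs in h.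
  rewrite -[qform 1%:M (En rho.+1 i1 i2 i3 m p l) _](subrK (qform 1%:M (En rho i1 i2 i3 m p l) (En rho i1 i2 i3 m p l))) h.
  ring.
rewrite (@sum6_ext R _ _ _ _ _ _ _ _ pt) !sum6D !sum6M.
have dx0 : dx != 0 by rewrite gt_eqF.
have dy0 : dy != 0 by rewrite gt_eqF.
have dz0 : dz != 0 by rewrite gt_eqF.
have z1 : \sum_(i1 < N1) \sum_(i2 < N2) \sum_(i3 < N3) \sum_(m < s) \sum_(p < iota) \sum_(l < sigma)
   (bt m * bb p * bh l * \sum_(k < r) b k * qform M1 (Ups rho i1 i2 i3 m p l k) (dX rho i1 i2 i3 m p l k)) = 0.
  rewrite reorder_x; apply: big1 => i2 _; apply: big1 => i3 _; apply: big1 => p _; apply: big1 => l _.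
  apply: (@inner0 R _ _ r (fun m => bt m * bb p * bh l) bt (bb p * bh l) b
     (fun i1 m k => qform M1 (Ups rho i1 i2 i3 m p l k) (dX rho i1 i2 i3 m p l k))).
    by move=> m; ring.
  move=> k.
  exact: (@tele R N1 s M1 bt atil dx (fun i1 => Fx rho i1 i2 i3 p l k)
     (fun i1 m => Ups rho i1 i2 i3 m p l k) (fun i1 m => dX rho i1 i2 i3 m p l k) hM1 dx0 hsX
     (fun i m => hUX rho i i2 i3 m p l k hrho) (fun i => hFX rho i i2 i3 p l k hrho)).
have z2 : \sum_(i1 < N1) \sum_(i2 < N2) \sum_(i3 < N3) \sum_(m < s) \sum_(p < iota) \sum_(l < sigma)
   (bt m * bb p * bh l * \sum_(k < r) b k * qform M2 (Ups rho i1 i2 i3 m p l k) (dY rho i1 i2 i3 m p l k)) = 0.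
  rewrite reorder_y; apply: big1 => i1 _; apply: big1 => i3 _; apply: big1 => m _; apply: big1 => l _.
  apply: (@inner0 R _ _ r (fun p => bt m * bb p * bh l) bb (bt m * bh l) b
     (fun i2 p k => qform M2 (Ups rho i1 i2 i3 m p l k) (dY rho i1 i2 i3 m p l k))).
    by move=> p; ring.
  move=> k.
  exact: (@tele R N2 iota M2 bb ab dy (fun i2 => Fy rho i1 i2 i3 m l k)
     (fun i2 p => Ups rho i1 i2 i3 m p l k) (fun i2 p => dY rho i1 i2 i3 m p l k) hM2 dy0 hsY
     (fun i p => hUY rho i1 i i3 m p l k hrho) (fun i => hFY rho i1 i i3 m l k hrho)).
have z3 : \sum_(i1 < N1) \sum_(i2 < N2) \sum_(i3 < N3) \sum_(m < s) \sum_(p < iota) \sum_(l < sigma)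
   (bt m * bb p * bh l * \sum_(k < r) b k * qform M3 (Ups rho i1 i2 i3 m p l k) (dZ rho i1 i2 i3 m p l k)) = 0.
  rewrite reorder_z; apply: big1 => i1 _; apply: big1 => i2 _; apply: big1 => m _; apply: big1 => p _.
  apply: (@inner0 R _ _ r (fun l => bt m * bb p * bh l) bh (bt m * bb p) b
     (fun i3 l k => qform M3 (Ups rho i1 i2 i3 m p l k) (dZ rho i1 i2 i3 m p l k))).
    by move=> l; ring.
  move=> k.
  exact: (@tele R N3 sigma M3 bh ah dz (fun i3 => Fz rho i1 i2 i3 m p k)
     (fun i3 l => Ups rho i1 i2 i3 m p l k) (fun i3 l => dZ rho i1 i2 i3 m p l k) hM3 dz0 hsZ
     (fun i l => hUZ rho i1 i2 i m p l k hrho) (fun i => hFZ rho i1 i2 i m p k hrho)).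
rewrite z1 z2 z3 !mulr0 !addr0 //.
Qed.
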